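(* Let $\mathcal{C}\subseteq\mathbb{F}_q^n$ be an MDS code with $|\mathcal{C}|=q^k\ge 2$ and minimum distance $d=n-k+1$. Then the minimum-distance graph $G(\mathcal{C})$ is connected.
   Context: $d(\cdot,\cdot)$ is Hamming distance. An $(n,M,d)_q$ code is MDS if $M=q^{n-d+1}$. The minimum-distance graph $G(\mathcal{C})$ has vertex set $\mathcal{C}$, with distinct $c_1,c_2$ adjacent iff $d(c_1,c_2)$ equals the minimum distance of $\mathcal{C}$. *)

(* Defs.v *)
From mathcomp Require Import all_boot all_algebra.
Set Implicit Arguments. Unset Strict Implicit. Unset Printing Implicit Defensive.

Definition hdist (F : finFieldType) (n : nat) (x y : 'rV[F]_n) : nat :=
  #|[set i : 'I_n | x ord0 i != y ord0 i]|.

(* Minimum distance of a code C: minimum Hamming distance over pairs of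
   distinct codewords (the default value n is never reached when #|C| >= 2,
   since all distances are <= n). *)
Definition mindist (F : finFieldType) (n : nat) (C : {set 'rV[F]_n}) : nat :=
  \big[minn/n]_(x in C) \big[minn/n]_(y in C | y != x) hdist x y.

Definition mdgraph (F : finFieldType) (n : nat) (C : {set 'rV[F]_n}) : rel 'rV[F]_n :=
  fun x y => [&& x \in C, y \in C, x != y & hdist x y == mindist C].

(* A graph on vertex set C is connected if any two vertices are joined by a
   path of edges (paths stay in C since edges only join vertices of C). *)
Definition md_connected (F : finFieldType) (n : nat) (C : {set 'rV[F]_n}) : Prop :=
  {in C &, forall x y, connect (mdgraph C) x y}.

(* Main.v *)
Require Import Defs.
From mathcomp Require Import all_boot all_algebra.
From mathcomp Require Import zify.
Set Implicit Arguments. Unset Strict Implicit. Unset Printing Implicit Defensive.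

Lemma bigmin_le (I : eqType) (r : seq I) (P : pred I) (G : I -> nat) m x :
  x \in r -> P x -> (\big[minn/m]_(i <- r | P i) G i <= G x)%N.
Proof.
elim: r => // a r IH; rewrite inE big_cons => /orP [/eqP <- Px|xr Px].
  by rewrite Px geq_minl.
case: (P a); last exact: IH.
by apply: leq_trans (geq_minr _ _) _; exact: IH.
Qed.

Lemma mindist_le (F : finFieldType) (n : nat) (C : {set 'rV[F]_n}) x y :
  x \in C -> y \in C -> y != x -> (mindist C <= hdist x y)%N.
Proof.
move=> xC yC yx; rewrite /mindist.
set G := fun x0 => \big[minn/n]_(y0 in C | y0 != x0) hdist x0 y0.
have h1 : (\big[minn/n]_(x0 in C) G x0 <= G x)%N.
  by apply: bigmin_le; [exact: mem_index_enum|exact: xC].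
apply: leq_trans h1 _; rewrite /G.
by apply: bigmin_le; [exact: mem_index_enum| rewrite /= yC yx].
Qed.

Lemma subset_card_ex (T : finType) (X : {set T}) m :
  (m <= #|X|)%N -> exists Y : {set T}, Y \subset X /\ #|Y| = m.
Proof.
elim: m => [|m IH] H; first by exists set0; rewrite sub0set cards0.
have [Y [YX cY]] := IH (ltnW H).
have : (0 < #|X :\: Y|)%N by rewrite cardsD (setIidPr YX) cY subn_gt0.
case/card_gt0P => a; rewrite inE => /andP [aY aX].
exists (a |: Y); split; first by rewrite subUset sub1set aX.
by rewrite cardsU1 aY cY.
Qed.

Lemma hdist_agree (F : finFieldType) (n : nat) (x z : 'rV[F]_n) (T : {set 'I_n}) :
  (forall i, i \in T -> x ord0 i = z ord0 i) -> (hdist x z <= n - #|T|)%N.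
Proof.
move=> H; have e : #|~: T| = (n - #|T|)%N by have h := cardsC T; rewrite card_ord in h; move: h; move: #|T| #|~: T| => a b <-; rewrite addKn.
rewrite /hdist -e; apply: subset_leq_card.
apply/subsetP => i; rewrite !inE; apply: contra => iT; apply/eqP; exact: H.
Qed.

Lemma proj_surj (F : finFieldType) (n k : nat) (C : {set 'rV[F]_n}) (S : {set 'I_n}) :
  #|C| = (#|F| ^ k)%N -> mindist C = (n - k + 1)%N -> #|S| = k ->
  forall w : 'rV[F]_n, exists2 c, c \in C & forall i, i \in S -> c ord0 i = w ord0 i.
Proof.
move=> cC md cS w.
pose f (c : 'rV[F]_n) : {ffun {i : 'I_n | i \in S} -> F} := [ffun i => c ord0 (val i)].
have inj : {in C &, injective f}.
  move=> a b aC bC fab; apply/eqP; apply: contraT => ab.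
  have h3 := mindist_le bC aC ab.
  have h2 : (hdist b a <= n - #|S|)%N.
    apply: hdist_agree => i iS.
    by move/ffunP: fab => /(_ (exist _ i iS)); rewrite !ffunE.
  rewrite md in h3; rewrite cS in h2; have := leq_trans h3 h2; by rewrite addn1 ltnn.
have im : f @: C = setT.
  apply/eqP; rewrite eqEcard subsetT /= cardsT card_ffun card_in_imset //.
  by rewrite cC card_sig cS.
have : f w \in f @: C by rewrite im inE.
case/imsetP => c cCc fe; exists c => // i iS.
by move/ffunP: fe => /(_ (exist _ i iS)); rewrite !ffunE.
Qed.

Theorem theorem9 (F : finFieldType) (n k : nat) (C : {set 'rV[F]_n}) :
  #|C| = (#|F| ^ k)%N ->
  (2 <= #|F| ^ k)%N ->
  mindist C = (n - k + 1)%N ->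
  md_connected C.
Proof.
move=> cC q2 md x0 y xC0 yC.
have q1 : (1 < #|F|)%N.
  apply/card_gt1P; exists 0%R, 1%R; split => //; rewrite eq_sym; exact: GRing.oner_neq0.
have kn : (k <= n)%N.
  rewrite -(leq_exp2l _ _ q1) -cC; apply: leq_trans (max_card _) _.
  by rewrite card_mx mul1n.
have k1 : (0 < k)%N by case: k q2 {cC md kn} => //; rewrite expn0.
suff H : forall m x, (hdist x y < m)%N -> x \in C -> connect (mdgraph C) x y.
  exact: (H (hdist x0 y).+1).
elim => // m IH x hm xC.
case: (eqVneq x y) => [-> // | xy].
case: (pickP (fun j => x ord0 j != y ord0 j)) => [j hj | h]; last first.
  by case/eqP: xy; apply/rowP => i; apply/eqP; rewrite -[_ == _]negbK h.
set A := [set i | x ord0 i == y ord0 i].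
have jA : j \notin A by rewrite inE.
have hA : (#|A| + hdist x y = n)%N.
  have h' := cardsC A; rewrite card_ord in h'; apply: etrans h'.
  congr (_ + _); apply: eq_card => i.
  by rewrite !inE.
have hmd : (mindist C <= hdist x y)%N by apply: mindist_le; rewrite // eq_sym.
rewrite md in hmd.
have cA : (#|A| <= k.-1)%N by lia.
set X := [set~ j] :\: A.
have cX : (k.-1 - #|A| <= #|X|)%N.
  rewrite cardsD cardsC1 card_ord.
  have : (#|[set~ j] :&: A| <= #|A|)%N by apply: subset_leq_card; apply: subsetIr.
  lia.
have [B [BX cB]] := subset_card_ex cX.
set T := A :|: B.
have cT : #|T| = k.-1.
  rewrite cardsU; have -> : A :&: B = set0.
    apply/setP => i; rewrite !inE; apply/negP => /andP [iA iB].
    move/subsetP: BX => /(_ i iB); by rewrite !inE iA.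
  rewrite cards0; lia.
have jT : j \notin T.
  rewrite in_setU negb_or jA /=.
  apply/negP => jB; move/subsetP: BX => /(_ j jB); rewrite !inE; by rewrite eqxx andbF.
set S := j |: T.
have cS : #|S| = k by rewrite cardsU1 jT cT; lia.
set w : 'rV[F]_n := (\row_i (if i == j then y ord0 i else x ord0 i))%R.
have [z zC hz] := proj_surj cC md cS w.
have zj : z ord0 j = y ord0 j by rewrite hz ?setU11 // /w mxE eqxx.
have zT : forall i, i \in T -> x ord0 i = z ord0 i.
  move=> i iT; rewrite hz; last by rewrite in_setU1 iT orbT.
  rewrite /w mxE.
  by case: eqP => // ei; move: jT; rewrite -ei iT.
have zx : z != x by apply/eqP => e; move: hj; rewrite -zj e eqxx.
have exz : mdgraph C x z.
  rewrite /mdgraph xC zC eq_sym zx /= md eqn_leq.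
  have h1 := hdist_agree zT; rewrite cT in h1.
  have h2 : (mindist C <= hdist x z)%N by apply: mindist_le.
  rewrite md in h2; apply/andP; split; lia.
have lt : (hdist z y < hdist x y)%N.
  apply: proper_card; apply/properP; split.
    apply/subsetP => i; rewrite !inE; apply: contraNN => e.
    have iS : i \in S.
      by rewrite in_setU1 in_setU inE e orbT.
    rewrite hz // /w mxE; by case: (i == j).
  by exists j; rewrite !inE ?zj ?eqxx ?hj.
apply: connect_trans (connect1 exz) _.
apply: IH zC; lia.
Qed.
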